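(* Let $x_0>0$ and let $(U_n)_{n\ge1}$ be random utility functions satisfying: $\sup_n\|U_n^+(\cdot,x_0)\|_1<\infty$, $\sup_n\|U_n^-(\cdot,x_0)\|_1<\infty$ and $\sup_n\|U_n'(\cdot,x_0)\|_q<\infty$ for some $q>1$. Suppose that for all $\varepsilon\in(0,x_0)$ and all $C\ge0$, $$\lim_{n\to\infty}\inf_{P\in\mathcal Q^T}P\Big(\int_{x_0-\varepsilon/2}^{x_0}U_n''(\cdot,v)\,dv<-\frac C\varepsilon\Big)=1.$$ Then for all $0\le x<x_0$ and $M\ge0$, $\lim_{n\to\infty}\inf_{P\in\mathcal Q^T}P(U_n(\cdot,x)\le -M)=1$.
   Context: Framework: $T\ge1$; Polish spaces $\Omega_1,\dots,\Omega_T$; $\Omega^t:=\Omega_1\times\cdots\times\Omega_t$. $\mathfrak P(X)$: Borel probability measures on Polish $X$; $\mathcal B_c(X)$: universal $\sigma$-algebra, each $P$ extended to it. $\mathcal SK_t$: universally measurable stochastic kernels on $\Omega_t$ given $\Omega^{t-1}$; $P\otimes p(A):=\int\int1_A(\omega^{t-1},\omega_t)p(d\omega_t,\omega^{t-1})P(d\omega^{t-1})$. Given random sets $\mathcal Q_{t+1}:\Omega^t\twoheadrightarrow\mathfrak P(\Omega_{t+1})$, $\mathcal Q^T:=\{Q_1\otimes q_2\otimes\cdots\otimes q_T:Q_1\in\mathcal Q_1,\ q_{s+1}\in\mathcal SK_{s+1},\ q_{s+1}(\cdot,\omega^s)\in\mathcal Q_{s+1}(\omega^s)\ Q_s\text{-a.s.}\}$.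 For universally measurable $X$ on $\Omega^T$ and $r\in(0,\infty)$, $\|X\|_r:=(\sup_{P\in\mathcal Q^T}E_P|X|^r)^{1/r}$. A random utility function is $U:\Omega^T\times(0,\infty)\to\mathbb R$ with $U(\cdot,x)$ universally measurable for each $x>0$ and $U(\omega^T,\cdot)$ concave, strictly increasing and twice continuously differentiable on $(0,\infty)$ for each $\omega^T$, extended to $0$ by right-continuity and by $-\infty$ on $(-\infty,0)$; $U',U''$ are derivatives in $x$. *)

(* Defs.v *)
From HB Require Import structures.
From mathcomp Require Import all_boot all_order all_algebra.
From mathcomp Require Import all_classical all_reals all_analysis measurable_realfun.
Set Implicit Arguments. Unset Strict Implicit. Unset Printing Implicit Defensive.
Import Order.TTheory GRing.Theory Num.Theory.
Import numFieldNormedType.Exports.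
Local Open Scope classical_set_scope.
Local Open Scope ring_scope.

Definition separable_space (X : topologicalType) : Prop :=
  exists D : set X, countable D /\ closure D = setT.

Definition Borel (X : ptopologicalType) : measurableType _ := g_sigma_algebraType (@open X).


Definition MSpace := {d : measure_display & measurableType d}.

Section omt.
Variable R : realType.
Variable Om : nat -> completePseudoMetricType R.
Fixpoint Omt (t : nat) : MSpace :=
  match t with
  | 0 => existT _ _ (Borel (Om 0))
  | t'.+1 => existT _ _ ((projT2 (Omt t') * Borel (Om t'.+1))%type : measurableType _)
  end.
End omt.

Section defs.
Context {R : realType}.
Local Open Scope ereal_scope.

Definition Pc d (X : measurableType d) (P : probability X R)
  : {measure set (caratheodory_type (P^*)%mu) -> \bar R} :=
  @completed_measure_extension _ _ R P.

Definition univ_meas d (X : measurableType d) (A : set X) : Prop :=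
  forall P : probability X R, measurable (A : set (caratheodory_type (P^*)%mu)).

Definition univ_meas_fun d (X : measurableType d) (f : X -> \bar R) : Prop :=
  forall B : set (\bar R), measurable B -> univ_meas (f @^-1` B).

Definition univ_meas_funR d (X : measurableType d) (f : X -> R) : Prop :=
  forall B : set R, measurable B -> univ_meas (f @^-1` B).

Definition sto_kernel d d' (X : measurableType d) (Y : measurableType d')
  (q : X -> probability Y R) : Prop :=
  forall A : set Y, measurable A -> univ_meas_fun (fun x => q x A).

Definition compose d d' (X : measurableType d) (Y : measurableType d')
  (P : probability X R) (q : X -> probability Y R) : set (X * Y) -> \bar R :=
  fun A => \int[Pc P]_x q x (xsection A x).

Definition Exp d (X : measurableType d) (P : probability X R) (f : X -> \bar R)
  : \bar R := \int[Pc P]_x f x.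

Definition rnorm d (X : measurableType d) (Q : set (probability X R)) (r : R)
  (f : X -> R) : \bar R :=
  poweR (ereal_sup [set Exp P (fun x => (`|f x| `^ r)%:E) | P in Q]) r^-1.

End defs.

Section QT.
Context {R : realType}.
Local Open Scope ereal_scope.
Variable Om : nat -> completePseudoMetricType R.
(* NB: indexing shifted by one: Om t is Omega_{t+1}, Omt Om t is Omega^{t+1} *)
Notation OT t := (projT2 (Omt Om t)).
Variable Q1 : set (probability (Borel (Om 0)) R).
Variable Qs : forall t : nat, OT t -> set (probability (Borel (Om t.+1)) R).

(* inQ t P <-> P = Q_1 (x) q_2 (x) ... (x) q_{t+1} with admissible kernels *)
Fixpoint inQ (t : nat) : probability (OT t) R -> Prop :=
  match t with
  | 0 => fun P => Q1 P
  | t'.+1 => fun P =>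
      exists (P' : probability (OT t') R)
             (q : OT t' -> probability (Borel (Om t'.+1)) R),
        [/\ inQ P', sto_kernel q,
            {ae Pc P', forall w, Qs w (q w)} &
            forall A : set (OT t'.+1), measurable A -> P A = compose P' q A]
  end.

(* the set Q^T of priors on Omega^T (T >= 1, Omega^T = OT T.-1) *)
Definition QT (T : nat) : set (probability (OT T.-1) R) := [set P | inQ P].

End QT.
Arguments QT {R Om} Q1 Qs T _.

Section utility.
Context {R : realType}.
Local Open Scope ring_scope.

Definition random_utility d (X : measurableType d) (U : X -> R -> R) : Prop :=
  (forall x : R, 0 < x -> univ_meas_funR (R := R) (fun w => U w x)) /\
  forall w : X,
    [/\
        (forall x y t : R, 0 < x -> 0 < y -> 0 <= t <= 1 ->
           t * U w x + (1 - t) * U w y <= U w (t * x + (1 - t) * y)),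
        (forall x y : R, 0 < x -> x < y -> U w x < U w y) &
        (forall x : R, 0 < x ->
           [/\ derivable (U w) x 1, derivable (derive1 (U w)) x 1 &
               {for x, continuous (derive1n 2 (U w))}])].

Definition Uext d (X : measurableType d) (U : X -> R -> R) (w : X) (x : R)
  : \bar R :=
  if 0 < x then (U w x)%:E
  else if x == 0 then lim ((fun y => (U w y)%:E) @ 0^'+)
  else -oo%E.

End utility.

(* Main.v *)
Require Import Defs.
From HB Require Import structures.
From mathcomp Require Import all_boot all_order all_algebra.
From mathcomp Require Import all_classical all_reals all_analysis measurable_realfun.
From mathcomp Require Import ring lra.
Import Order.TTheory GRing.Theory Num.Theory.
Import numFieldNormedType.Exports.
Local Open Scope classical_set_scope.
Local Open Scope ring_scope.

Section helpers.
Context {R : realType}.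

Lemma dq_cvg (f : R -> R) a : derivable f a 1 ->
  (fun h => h^-1 * (f (h + a) - f a)) @ 0^' --> derive1 f a.
Proof.
move=> df; rewrite derive1E /derive.
have -> : (fun h => h^-1 * (f (h + a) - f a)) =
   (fun h => h^-1 *: ((f \o shift a) (h *: 1) - f a)).
  by apply/funext => h /=; rewrite /GRing.scale /= mulr1.
exact: df.
Qed.

Lemma dnbhs_left (g : R -> R) (l : R) : g x @[x --> (0:R)^'] --> l -> g x @[x --> (0:R)^'-] --> l.
Proof.
move=> H; apply: cvg_trans H; apply: cvg_app.
by apply: within_subset => y /= /lt_eqF ->.
Qed.

Lemma deriv_ge0 (f : R -> R) a : 0 < a ->
  (forall x y : R, 0 < x -> x < y -> f x < f y) -> derivable f a 1 ->
  0 <= derive1 f a.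
Proof.
move=> a0 finc df.
have := cvgr_to_ge (dq_cvg _ _ df); apply.
near=> h.
have h0 : h != 0 by near: h; exact: nbhs_dnbhs_neq.
have ha : `|h| < a by near: h; exact: dnbhs0_lt.
have [hn|hp|hz] := ltgtP h 0.
- have : f (h + a) < f a.
    apply: finc; last by lra.
    by move: ha; rewrite ltr0_norm // => ?; lra.
  move=> lt; rewrite -mulrNN; apply: mulr_ge0; last by lra.
  by rewrite oppr_ge0 invr_le0 ltW.
- have : f a < f (h + a) by apply: finc => //; lra.
  move=> lt; apply: mulr_ge0; last by lra.
  by rewrite invr_ge0 ltW.
- by rewrite hz eqxx in h0.
Unshelve. all: by end_near. Qed.

Lemma tangent (f : R -> R) x a : 0 < x -> x < a ->
  (forall x y t : R, 0 < x -> 0 < y -> 0 <= t <= 1 ->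
           t * f x + (1 - t) * f y <= f (t * x + (1 - t) * y)) ->
  derivable f a 1 -> (a - x) * derive1 f a <= f a - f x.
Proof.
move=> x0 xa fconc df.
have L := dnbhs_left _ _ (dq_cvg _ _ df).
have ax : 0 < a - x by lra.
suff : derive1 f a <= (f a - f x) / (a - x).
  by rewrite ler_pdivlMr // mulrC.
apply: (cvgr_to_le L).
near=> h.
have hn : h < 0 by near: h; exact: nbhs_left_lt.
have hx : x - a < h by near: h; apply: nbhs_left_gt; lra.
set t := - h / (a - x).
have t01 : 0 <= t <= 1.
  rewrite /t; apply/andP; split.
    by apply: divr_ge0; lra.
  by rewrite ler_pdivrMr //; lra.
have := fconc x a t x0 (lt_trans x0 xa) t01.
have -> : t * x + (1 - t) * a = h + a.
  by rewrite /t; field; lra.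
move=> key.
have key2 : t * (f x - f a) <= f (h + a) - f a by lra.
apply: (le_trans (y := h^-1 * (t * (f x - f a)))).
  by apply: ler_wnM2l => //; rewrite invr_le0 ltW.
rewrite /t le_eqVlt; apply/orP; left; apply/eqP; field; lra.
Unshelve. all: by end_near. Qed.

Lemma ftc2 (f : R -> R) b c : 0 < b -> b < c ->
  (forall x : R, 0 < x ->
           [/\ derivable f x 1, derivable (derive1 f) x 1 &
               {for x, continuous (derive1n 2 f)}]) ->
  (\int[lebesgue_measure]_(v in `[b, c]) (derive1n 2 f v)%:E =
    (derive1 f c - derive1 f b)%:E)%E.
Proof.
move=> b0 bc reg.
have cont x : 0 < x -> {for x, continuous (derive1 f)}.
  move=> /reg[_ d _]; apply/differentiable_continuous.
  by rewrite -derivable1_diffP.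
rewrite EFinB; apply: continuous_FTC2 => //.
- apply: continuous_in_subspaceT => x; rewrite inE /= in_itv /= => /andP[bx _].
  by have [_ _] := reg x (lt_le_trans b0 bx).
- split.
  + move=> x; rewrite in_itv /= => /andP[bx _].
    by have [_ ? _] := reg x (lt_trans b0 bx).
  + exact/cvg_at_right_filter/cont.
  + exact/cvg_at_left_filter/cont/(lt_trans b0 bc).
Qed.

Lemma pointwise (f : R -> R) x b c (K C : R) : 0 < x -> x < b -> b < c ->
  (forall x y t : R, 0 < x -> 0 < y -> 0 <= t <= 1 ->
           t * f x + (1 - t) * f y <= f (t * x + (1 - t) * y)) ->
  (forall x y : R, 0 < x -> x < y -> f x < f y) ->
  (forall x : R, 0 < x ->
           [/\ derivable f x 1, derivable (derive1 f) x 1 &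
               {for x, continuous (derive1n 2 f)}]) ->
  (\int[lebesgue_measure]_(v in `[b, c]) (derive1n 2 f v)%:E < (- C)%:E)%E ->
  f c < K -> f x <= K - (b - x) * C.
Proof.
move=> x0 xb bc fconc finc reg hI fK.
have b0 : 0 < b by lra.
rewrite ftc2 // lte_fin in hI.
have d0 := deriv_ge0 f c (lt_trans b0 bc) finc (let: And3 h _ _ := reg c (lt_trans b0 bc) in h).
have tg := tangent f x b x0 xb fconc (let: And3 h _ _ := reg b b0 in h).
have fbc := finc b c b0 bc.
have : (b - x) * C <= (b - x) * derive1 f b.
  by apply: ler_wpM2l; lra.
lra.
Qed.

End helpers.

Section mk.
Context {R : realType}.
Local Open Scope ereal_scope.

Lemma Pc_le d (X : measurableType d) (P : probability X R) (A B : set X) :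
  A `<=` B -> Pc P A <= Pc P B.
Proof. move=> AB; exact: le_mu_ext. Qed.

Lemma Pc_ge0 d (X : measurableType d) (P : probability X R) (A : set X) :
  0 <= Pc P A.
Proof. exact: measure_ge0. Qed.

Lemma Pc_le1 d (X : measurableType d) (P : probability X R) (A : set X) :
  Pc P A <= 1.
Proof.
apply: (le_trans (Pc_le _ _ P _ _ (subsetT A))).
rewrite /Pc /= /completed_measure_extension measurable_mu_extE //.
by apply: probability_le1.
Qed.

Lemma markov_part d (X : measurableType d) (P : probability X R) (f : X -> R)
  (K K' : R) : univ_meas_funR f -> (0 < K')%R ->
  Exp P (fun w => (`|Num.max (f w) 0| `^ 1)%:E) <= K%:E ->
  forall A : set X, Pc P A - (K / K')%:E <= Pc P (A `&` [set w | (f w < K')%R]).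
Proof.
move=> mf K'0 HE A.
pose g := fun w : caratheodory_type (P^*)%mu => (Num.max (f w) 0)%:E.
have mf' : measurable_fun setT (f : caratheodory_type (P^*)%mu -> R).
  move=> _ B mB; rewrite setTI; exact: mf.
have mg : measurable_fun setT g.
  apply/measurable_EFinP.
  have := @measurable_maxr _ _ _ setT _ (cst 0%R) mf' (measurable_cst _).
  by apply: eq_measurable_fun => w _ /=.
have mid : measurable_fun setT (@id (\bar R)) by exact: measurable_id.
have := le_integral_comp_abse (Pc P) measurableT
   (a := K') mid (fun r r0 => r0) (fun x y _ _ xy => xy) mg K'0.
move=> Hm.
set N := [set x | K'%:E <= `|g x|] in Hm.
rewrite setTI in Hm.
have mN : measurable N.
  have mag : measurable_fun setT (fun x => `|g x|).
    by apply: measurableT_comp => //; exact: abse_measurable.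
  have := emeasurable_fun_c_infty measurableT mag K'%:E.
  by rewrite setTI.
have HI : \int[Pc P]_x `|g x| = Exp P (fun w => (`|Num.max (f w) 0| `^ 1)%:E).
  rewrite /Exp; apply: eq_integral => w _.
  by rewrite /g /= powRr1.
rewrite HI in Hm.
have PN : Pc P N <= (K / K')%:E.
  have := Pc_le1 _ _ P N; have := Pc_ge0 _ _ P N.
  case: (Pc P N) Hm => // r Hm r0 r1.
  rewrite lee_fin ler_pdivlMr // mulrC -lee_fin.
  exact: le_trans Hm HE.
have split := mN A.
rewrite leeBlDr //.
change (P^*%mu A <= P^*%mu (A `&` [set w | (f w < K')%R]) + (K / K')%:E).
rewrite split addeC; apply: leeD; last first.
  by apply: le_trans PN; apply: (Pc_le _ _ P) => w [].
apply: le_mu_ext => w [Aw Nw]; split => //.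
move/negP: Nw; rewrite /N /g /= -ltNge lte_fin => H.
apply: le_lt_trans H.
by rewrite (le_trans _ (ler_norm _)) // le_max lexx.
Qed.
End mk.

Theorem lemma4p5 (R : realType)
  (* Polish spaces Omega_1, Omega_2, ... (Om t is Omega_{t+1}) *)
  (Om : nat -> completePseudoMetricType R)
  (Om_polish : forall t, hausdorff_space (Om t) /\ separable_space (Om t))
  (T : nat) (T_ge1 : (1 <= T)%N)
  (* the random sets Q_1 and Q_{t+1} : Omega^t ->> P(Omega_{t+1}) *)
  (Q1 : set (probability (Borel (Om 0)) R))
  (Qs : forall t : nat, projT2 (Omt Om t) -> set (probability (Borel (Om t.+1)) R))
  (x0 : R) (x0_gt0 : 0 < x0)
  (U : nat -> projT2 (Omt Om T.-1) -> R -> R)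
  (U_ru : forall n, random_utility (U n))
  (Up_bd : exists K : R, forall n,
     (rnorm (QT Q1 Qs T) 1 (fun w => (Num.max (U n w x0) 0)%R) <= K%:E)%E)
  (Um_bd : exists K : R, forall n,
     (rnorm (QT Q1 Qs T) 1 (fun w => (Num.max (- U n w x0) 0)%R) <= K%:E)%E)
  (U'_bd : exists q : R, 1 < q /\ exists K : R, forall n,
     (rnorm (QT Q1 Qs T) q (fun w => derive1 (U n w) x0) <= K%:E)%E)
  (U''_hyp : forall eps C : R, 0 < eps < x0 -> 0 <= C ->
     (fun n => ereal_inf [set Pc P
        [set w | (\int[lebesgue_measure]_(v in `[(x0 - eps / 2)%R, x0])
                    (derive1n 2 (U n w) v)%:E < (- C / eps)%R%:E)%E]
        | P in QT Q1 Qs T]) @ \oo --> 1%E) :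
  forall x M : R, 0 <= x < x0 -> 0 <= M ->
    (fun n => ereal_inf [set Pc P [set w | (Uext (U n) w x <= (- M)%R%:E)%E]
                        | P in QT Q1 Qs T]) @ \oo --> 1%E.
Proof.
move=> x M /andP[x0p xx0] M0.
have [x' [x'0 x'x0 Hx']] : exists x' : R, [/\ 0 < x', x' < x0 &
    forall n w, (Uext (U n) w x <= (U n w x')%:E)%E].
  have [xz|xnz] := eqVneq x 0.
    exists (x0 / 2); split; [lra|lra|].
    move=> n w; rewrite xz /Uext ltxx eqxx.
    have [conc incr _] := (U_ru n).2 w.
    have H := @nondecreasing_at_right_cvge R (fun y => (U n w y)%:E) 0
      (BInfty _ false) erefl.
    rewrite (cvg_lim _ (H _)) //.
      apply: ereal_inf_lbound; exists (x0 / 2) => //.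
      by rewrite /= in_itv /= andbT; lra.
    move=> a c; rewrite !in_itv /= !andbT => a0 c0 ac.
    rewrite lee_fin; move: ac; rewrite le_eqVlt => /orP[/eqP->//|ac].
    exact/ltW/incr.
  have xp : 0 < x by rewrite lt_neqAle eq_sym xnz x0p.
  by exists x; split => // n w; rewrite /Uext xp.
have [K HK] := Up_bd.
pose eps := (x0 - x') / 2.
have eps0 : 0 < eps < x0 by rewrite /eps; apply/andP; split; lra.
pose b := x0 - eps / 2.
have Exp_bd : forall n P, QT Q1 Qs T P ->
    (Exp P (fun w => (`|Num.max (U n w x0) 0| `^ 1)%:E) <= K%:E)%E.
  move=> n P QP; apply: le_trans (HK n).
  rewrite /rnorm invr1.
  have ES : (Exp P (fun w => (`|Num.max (U n w x0) 0| `^ 1)%:E) <=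
     ereal_sup [set Exp P0 (fun w => (`|Num.max (U n w x0) 0| `^ 1)%:E)
                | P0 in QT Q1 Qs T])%E.
    by apply: ereal_sup_ubound; exists P.
  rewrite poweRe1 //; apply: le_trans ES.
  by apply: integral_ge0 => w _; rewrite lee_fin powR_ge0.
have claim : forall e : R, 0 < e -> exists C : R, 0 <= C /\
   forall n P, QT Q1 Qs T P ->
   (Pc P [set w | (\int[lebesgue_measure]_(v in `[(x0 - eps / 2)%R, x0])
                    (derive1n 2 (U n w) v)%:E < (- C / eps)%R%:E)%E] - e%:E
     <= Pc P [set w | (Uext (U n) w x <= (- M)%R%:E)%E])%E.
  move=> e e0.
  pose K1 := Num.max K 1.
  have K1p : 0 < K1 by rewrite lt_max ltr01 orbT.
  pose K' := K1 / e.
  have K'0 : 0 < K' by apply: divr_gt0.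
  exists (K' + M); split; first lra.
  move=> n P QP.
  have HE : (Exp P (fun w => (`|Num.max (U n w x0) 0| `^ 1)%:E) <= K1%:E)%E.
    by apply: le_trans (Exp_bd n P QP) _; rewrite lee_fin le_max lexx.
  have := markov_part _ _ P (fun w => U n w x0) K1 K' ((U_ru n).1 x0 x0_gt0) K'0 HE
    [set w | (\int[lebesgue_measure]_(v in `[(x0 - eps / 2)%R, x0])
                    (derive1n 2 (U n w) v)%:E < (- (K' + M) / eps)%R%:E)%E].
  have -> : K1 / K' = e.
    by rewrite /K'; field; rewrite !gt_eqF.
  move=> H; apply: (le_trans H); apply: (Pc_le _ _ P) => w [hI hK].
  have [conc incr reg] := (U_ru n).2 w.
  apply: le_trans (Hx' n w) _; rewrite lee_fin /=.
  have := pointwise (U n w) x' b x0 K' ((K' + M) / eps) x'0 _ _ conc incr reg _ hK.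
  have -> : (b - x') * ((K' + M) / eps) = 3 / 2 * (K' + M).
    rewrite /b /eps; field; lra.
  move=> Hp.
  have : U n w x' <= K' - 3 / 2 * (K' + M).
    apply: Hp.
    + by rewrite /b /eps; lra.
    + by rewrite /b; lra.
    + by rewrite -mulNr.
  lra.
have [P0 QP0] : exists P0, QT Q1 Qs T P0.
  apply: contrapT => nQ.
  have /fine_cvgP[Hf _] := U''_hyp eps 0 eps0 (lexx 0).
  have [n /=] := filter_ex Hf.
  rewrite (_ : [set _ | P in QT Q1 Qs T] = set0) ?ereal_inf0 //.
  by apply/seteqP; split => // y [P QP _]; apply: nQ; exists P.
pose tgt n := ereal_inf [set Pc P [set w | (Uext (U n) w x <= (- M)%R%:E)%E]
                        | P in QT Q1 Qs T].
change (tgt @ \oo --> 1%E).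
have t_ge0 n : (0 <= tgt n)%E.
  by apply/ereal_infP => _ [P _ <-]; exact: Pc_ge0.
have t_le1 n : (tgt n <= 1)%E.
  apply: le_trans (Pc_le1 _ _ P0 [set w | (Uext (U n) w x <= (- M)%R%:E)%E]).
  by apply: ereal_inf_lbound; exists P0.
have tfin n : tgt n \is a fin_num.
  by rewrite ge0_fin_numE // (le_lt_trans (t_le1 n)) // ltey.
apply/fine_cvgP; split; first exact: nearW.
apply/cvgrPdist_lt => e e0.
have e20 : 0 < e / 2 by lra.
have [C [C0 HC]] := claim (e / 2) e20.
have hcv0 := U''_hyp eps C eps0 C0.
pose h n := ereal_inf [set Pc P
        [set w | (\int[lebesgue_measure]_(v in `[(x0 - eps / 2)%R, x0])
                    (derive1n 2 (U n w) v)%:E < (- C / eps)%R%:E)%E]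
        | P in QT Q1 Qs T].
change (h @ \oo --> 1%E) in hcv0.
have /fine_cvgP[hfin /cvgrPdist_lt /(_ (e / 2) e20) hcv] := hcv0.
apply: filterS2 hfin hcv => n hf hd /=.
rewrite /= in hd.
have key : (h n - (e / 2)%:E <= tgt n)%E.
  apply/ereal_infP => _ [P QP <-].
  apply: le_trans (HC n P QP); apply: leeB; last exact: lexx.
  by apply: ereal_inf_lbound; exists P.
have t1 : fine (tgt n) <= 1 by rewrite -lee_fin fineK // t_le1.
move: key.
rewrite -(fineK hf) -(fineK (tfin n)) -EFinB !lee_fin => key.
have := ler_norm (1 - fine (h n)).
rewrite [X in _ -> X < e]ger0_norm; last by lra.
lra.
Qed.
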